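(* There is an absolute constant $C>0$ such that the following holds. Let $m,q\ge1$ and let $\mu_1,\dots,\mu_m$ be random elements of $\Delta_q$ such that for each $x\in[q]$ the sequence $(\mu_i(x))_{i\in[m]}$ is a martingale. Then for every integer $n$ with $nq\ge2$, $$\sum_{x\in[q]}\mathbb E\Big[\max_{i\in[m]}\mu_i(x)-\min_{i\in[m]}\mu_i(x)\Big]\le\min\Big\{C\log(nq)\,\mathbb E[\mathrm{TV}(\mu_1,\mu_m)]+\tfrac1n,\ \ C\sqrt q\,\Big(\mathbb E\Big[\sum_{x\in[q]}(\mu_m(x)-\mu_1(x))^2\Big]\Big)^{1/2}\Big\}.$$
   Context: $\Delta_q$ is the probability simplex on $[q]$, $\mathrm{TV}$ the total variation distance, $\log$ the natural logarithm. *)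

(* Defs.v *)
From HB Require Import structures.
From mathcomp Require Import all_boot all_order all_algebra.
From mathcomp Require Import all_classical all_reals all_analysis.
From mathcomp Require Import Rstruct Rstruct_topology.
Set Implicit Arguments. Unset Strict Implicit. Unset Printing Implicit Defensive.
Import Order.TTheory GRing.Theory Num.Theory.
Import numFieldNormedType.Exports.
Local Open Scope classical_set_scope.
Local Open Scope ring_scope.

Notation RR := Rdefinitions.R.

Definition in_simplex (q : nat) (p : 'I_q -> RR) : Prop :=
  (forall x, 0 <= p x) /\ \sum_(x < q) p x = 1.

Definition TV (q : nat) (p p' : 'I_q -> RR) : RR :=
  2^-1 * \sum_(x < q) `|p x - p' x|.

Definition Expect d (T : measurableType d) (P : probability T RR) (f : T -> RR) : RR :=
  \int[P]_(w in setT) f w.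

Definition filtration d (T : measurableType d) (F : nat -> set (set T)) : Prop :=
  (forall i, @sigma_algebra T setT (F i)) /\
  (forall i, F i `<=` measurable) /\
  (forall i, F i `<=` F i.+1).

(* X (indexed by i < m) is a martingale w.r.t. F under P: X i is F i-measurable
   and integrable, and E[X (i+1) 1_A] = E[X i 1_A] for all A in F i
   (i.e. E[X (i+1) | F i] = X i). *)
Definition martingale d (T : measurableType d) (P : probability T RR)
  (F : nat -> set (set T)) (m : nat) (X : nat -> T -> RR) : Prop :=
  (forall i, (i < m)%N ->
     (forall B : set RR, measurable (B : set (measurableTypeR RR)) -> F i (X i @^-1` B)) /\
     P.-integrable setT (fun w => (X i w)%:E)) /\
  (forall i, (i.+1 < m)%N -> forall A, F i A ->
     \int[P]_(w in A) X i.+1 w = \int[P]_(w in A) X i w).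

(* Main.v *)
Require Import Defs.
From HB Require Import structures.
From mathcomp Require Import all_boot all_order all_algebra.
From mathcomp Require Import all_classical all_reals all_analysis.
From mathcomp Require Import Rstruct Rstruct_topology.
From mathcomp Require Import ring lra.
From mathcomp Require Import measurable_realfun lebesgue_Rintegral measurable_fun_approximation lebesgue_integrable lebesgue_integral_nonneg.
Import Order.TTheory GRing.Theory Num.Theory.
Import numFieldNormedType.Exports.
Local Open Scope classical_set_scope.
Local Open Scope ring_scope.
Set Implicit Arguments. Unset Strict Implicit. Unset Printing Implicit Defensive.

Section E.
Context d (T : measurableType d) (R : realType) (P : probability T R).
Definition bnd (f : T -> R) := measurable_fun setT f /\ exists M : R, forall w, `|f w| <= M.
Definition EE (f : T -> R) : R := \int[P]_(w in setT) f w.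
Local Notation E := EE.

Lemma bnd_int f : bnd f -> P.-integrable setT (EFin \o f).
Proof.
move=> [mf [M hM]]; apply/integrableP; split; first exact/measurable_EFinP.
have M0 : 0 <= M by apply: le_trans (hM point).
apply: (le_lt_trans (integral_le_bound (M%:E) _ _ _ _)) => //=.
- exact/measurable_EFinP.
- by apply: aeW => w _ /=; rewrite lee_fin.
- by rewrite probability_setT mule1 ltry.
Qed.

Lemma bndD f g : bnd f -> bnd g -> bnd (fun w => f w + g w).
Proof.
move=> [mf [M hM]] [mg [N hN]]; split; first exact: measurable_funD.
by exists (M + N) => w; apply: le_trans (ler_normD _ _) _; apply: lerD.
Qed.

Lemma bndN f : bnd f -> bnd (fun w => - f w).
Proof.
move=> [mf [M hM]]; split; first exact: measurable_funN.
by exists M => w; rewrite normrN.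
Qed.

Lemma bndB f g : bnd f -> bnd g -> bnd (fun w => f w - g w).
Proof. by move=> hf hg; apply: bndD => //; apply: bndN. Qed.

Lemma bndM f g : bnd f -> bnd g -> bnd (fun w => f w * g w).
Proof.
move=> [mf [M hM]] [mg [N hN]]; split; first exact: measurable_funM.
exists (M * N) => w; rewrite normrM; apply: ler_pM => //.
Qed.

Lemma bnd_cst c : bnd (fun _ => c).
Proof. by split; [exact: measurable_cst | exists `|c|]. Qed.

Lemma bnd_sum n (f : nat -> T -> R) : (forall i, (i < n)%N -> bnd (f i)) ->
  bnd (fun w => \sum_(i < n) f i w).
Proof.
elim: n => [|n IH] hf.
  by under eq_fun do rewrite big_ord0; apply: bnd_cst.
under eq_fun do rewrite big_ord_recr /=.
apply: bndD; last exact: hf.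
by apply: IH => i hi; apply: hf; apply: ltnW.
Qed.

Lemma ED f g : bnd f -> bnd g -> E (fun w => f w + g w) = E f + E g.
Proof. by move=> hf hg; rewrite /EE; apply: RintegralD => //; apply: bnd_int. Qed.

Lemma EB f g : bnd f -> bnd g -> E (fun w => f w - g w) = E f - E g.
Proof. by move=> hf hg; rewrite /EE; apply: RintegralB => //; apply: bnd_int. Qed.

Lemma EZ c f : bnd f -> E (fun w => c * f w) = c * E f.
Proof. by move=> hf; rewrite /EE; apply: RintegralZl => //; apply: bnd_int. Qed.

Lemma Ecst c : E (fun _ => c) = c.
Proof.
rewrite /EE Rintegral_cst //.
have -> : fine (P setT) = 1 by exact: (congr1 fine (probability_setT P)).
by rewrite mulr1.
Qed.

Lemma Esum n (f : nat -> T -> R) : (forall i, (i < n)%N -> bnd (f i)) ->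
  E (fun w => \sum_(i < n) f i w) = \sum_(i < n) E (f i).
Proof.
elim: n => [|n IH] hf.
  by rewrite /EE; under eq_Rintegral do rewrite big_ord0; rewrite big_ord0 -/(EE _) Ecst.
rewrite /EE; under eq_Rintegral do rewrite big_ord_recr /=; rewrite -/(EE _).
rewrite big_ord_recr /= ED; last exact: hf.
  by rewrite IH // => i hi; apply: hf; apply: ltnW.
by apply: bnd_sum => i hi; apply: hf; apply: ltnW.
Qed.

Lemma leE f g : bnd f -> bnd g -> (forall w, f w <= g w) -> E f <= E g.
Proof. by move=> hf hg hfg; rewrite /EE; apply: le_Rintegral => //; apply: bnd_int. Qed.

Lemma E_ge0 f : (forall w, 0 <= f w) -> 0 <= E f.
Proof. by move=> hf; rewrite /EE; apply: Rintegral_ge0. Qed.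


Lemma bnd_norm f : bnd f -> bnd (fun w => `|f w|).
Proof.
move=> [mf [M hM]]; split; last by exists M => w; rewrite normr_id.
by apply: measurableT_comp => //; apply: normr_measurable.
Qed.

Lemma bnd_sumO n (f : 'I_n -> T -> R) : (forall i, bnd (f i)) ->
  bnd (fun w => \sum_(i < n) f i w).
Proof.
elim: n f => [|n IH] f hf.
  by under eq_fun do rewrite big_ord0; apply: bnd_cst.
under eq_fun do rewrite big_ord_recr /=.
apply: bndD => //; exact: (IH (fun i => f (widen_ord (leqnSn n) i))).
Qed.

Lemma EsumO n (f : 'I_n -> T -> R) : (forall i, bnd (f i)) ->
  E (fun w => \sum_(i < n) f i w) = \sum_(i < n) E (f i).
Proof.
elim: n f => [|n IH] f hf.
  by rewrite /EE; under eq_Rintegral do rewrite big_ord0; rewrite big_ord0 -/(EE _) Ecst.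
rewrite /EE; under eq_Rintegral do rewrite big_ord_recr /=; rewrite -/(EE _).
rewrite big_ord_recr /= ED; [|by apply: (@bnd_sumO n (fun i => f (widen_ord (leqnSn n) i))) | by []].
by rewrite (IH (fun i => f (widen_ord (leqnSn n) i))).
Qed.

End E.
Section Fm.
Context d (T : measurableType d) (R : realType).

Definition Fmeas (G : set (set T)) (f : T -> R) :=
  @measurable_fun _ _ (g_sigma_algebraType G) R setT f.

Lemma FmeasP G f : sigma_algebra setT G -> Fmeas G f ->
  forall B : set R, measurable B -> G (f @^-1` B).
Proof.
move=> sG mf B mB; have := mf measurableT B mB; rewrite setTI.
by rewrite /measurable /= (sigma_algebra_id sG).
Qed.

Lemma FmeasI G f : (forall B : set R, measurable B -> G (f @^-1` B)) -> Fmeas G f.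
Proof.
move=> h _ B mB; rewrite setTI; apply: sub_sigma_algebra; exact: h.
Qed.

Lemma Fmeas_mono G1 G2 f : sigma_algebra setT G1 -> G1 `<=` G2 ->
  Fmeas G1 f -> Fmeas G2 f.
Proof. by move=> s1 s12 mf; apply: FmeasI => B mB; apply: s12; apply: FmeasP. Qed.

Lemma Fmeas_T G f : sigma_algebra setT G -> G `<=` measurable ->
  Fmeas G f -> measurable_fun setT f.
Proof.
by move=> sG sub mf _ B mB; rewrite setTI; apply: sub; apply: FmeasP.
Qed.

End Fm.

Section gen.
Context d (T : measurableType d) (R : realType).

Lemma mfun_ge (g : T -> R) (c : R) : measurable_fun setT g ->
  measurable_fun setT (fun w => (nat_of_bool (c <= g w))%:R : R).
Proof.
move=> mg.
have -> : (fun w => (nat_of_bool (c <= g w))%:R : R) = \1_(g @^-1` `[c, +oo[%classic).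
  apply/funext => w; rewrite indicE preimage_itvcy; congr (GRing.natmul _ (nat_of_bool _)).
  by apply/idP/idP => [h|/set_mem //]; apply: mem_set.
apply: measurable_indic; have := mg measurableT _ (measurable_itv `[c, +oo[).
by rewrite setTI.
Qed.

Lemma mfun_prod n (g : nat -> T -> R) : (forall i, (i < n)%N -> measurable_fun setT (g i)) ->
  measurable_fun setT (fun w => \prod_(i < n) g i w).
Proof.
elim: n => [|n IH] hg.
  by under eq_fun do rewrite big_ord0; apply: measurable_cst.
under eq_fun do rewrite big_ord_recr /=.
apply: measurable_funM; last exact: hg.
by apply: IH => i hi; apply: hg; apply: ltnW.
Qed.

End gen.

Definition is01 {T} {R : realType} (f : T -> R) := forall w, f w = 0 \/ f w = 1.

Lemma is01_prod {T} {R : realType} n (g : nat -> T -> R) : (forall i, is01 (g i)) ->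
  is01 (fun w => \prod_(i < n) g i w).
Proof.
move=> hg w; elim: n => [|n IH]; first by rewrite big_ord0; right.
rewrite big_ord_recr /=; case: IH => ->; first by left; rewrite mul0r.
by rewrite mul1r; apply: hg.
Qed.

Lemma is01_ge {T} {R : realType} (g : T -> R) (c : R) : is01 (fun w => (nat_of_bool (c <= g w))%:R : R).
Proof. by move=> w; case: (c <= g w); [right|left]. Qed.

Lemma is01_C {T} {R : realType} (g : T -> R) : is01 g -> is01 (fun w => 1 - g w).
Proof. by move=> h w; case: (h w) => ->; [right; rewrite subr0 | left; rewrite subrr]. Qed.

Lemma is01_M {T} {R : realType} (f g : T -> R) : is01 f -> is01 g -> is01 (fun w => f w * g w).
Proof. by move=> hf hg w; case: (hf w) => ->; [left; rewrite mul0r| rewrite mul1r; apply: hg]. Qed.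

Lemma is01_bnd {T} {R : realType} (f : T -> R) w : is01 f -> `|f w| <= 1.
Proof. by move=> h; case: (h w) => ->; rewrite ?normr0 ?normr1. Qed.
Section gen2.
Context {R : realType}.

Lemma exists_bigmax n (f : 'I_n -> R) (c : R) : 0 < c ->
  c <= \big[Order.max/0]_(i < n) f i -> exists i, c <= f i.
Proof.
move=> c0 hc; case: (boolP [exists i, c <= f i]) => [/existsP [i hi]|/existsPn h].
  by exists i.
have : \big[Order.max/0]_(i < n) f i < c.
  by apply/bigmax_ltP; split => // i _; rewrite ltNge h.
by rewrite ltNge hc.
Qed.

Lemma bigmax1B n (f : nat -> R) :
  \big[Order.max/0]_(i < n) (1 - f i) = 1 - \big[Order.min/1]_(i < n) f i.
Proof.
elim: n f => [|n IH] f; first by rewrite !big_ord0 subrr.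
rewrite !big_ord_recl /= (IH (fun i => f i.+1)).
set A := \big[Order.min/1]_(i < n) f i.+1.
case: (leP A (f 0%N)) => h.
  by rewrite max_r // lerD2l lerN2.
by rewrite max_l // lerD2l lerN2 ltW.
Qed.

Lemma geo (l0 : R) K : l0 + \sum_(k < K) 2 ^+ k * l0 = 2 ^+ K * l0.
Proof.
elim: K => [|K IH]; first by rewrite big_ord0 expr0 mul1r addr0.
by rewrite big_ord_recr /= addrA IH exprS; ring.
Qed.

Lemma geo2 K : \sum_(k < K) (2 ^+ k)^-1 + 2 * (2 ^+ K)^-1 = 2 :> R.
Proof.
elim: K => [|K IH]; first by rewrite big_ord0 expr0 invr1 mulr1 add0r.
rewrite big_ord_recr /= -[in RHS]IH exprS.
have h : (2 ^+ K : R) != 0 by rewrite gt_eqF // exprn_gt0.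
by field.
Qed.

Lemma dyadic (v l0 : R) (u : R -> R) K : 0 < l0 -> v < 2 ^+ K * l0 ->
  (forall l, 0 <= u l) -> (forall l, 0 < l -> l <= v -> u l = 1) ->
  v <= l0 + \sum_(k < K) (2 ^+ k * l0) * u (2 ^+ k * l0).
Proof.
move=> l00 hv u0 u1; elim: K hv => [|K IH] hv.
  by rewrite big_ord0 addr0 ltW // -(mul1r l0).
case: (ltP v (2 ^+ K * l0)) => h.
  rewrite big_ord_recr /= addrA; apply: (le_trans (IH h)).
  by rewrite lerDl mulr_ge0 // mulr_ge0 // ?exprn_ge0 // ltW.
rewrite (eq_bigr (fun k : 'I_K.+1 => 2 ^+ k * l0)) ?geo ?ltW //.
move=> k _; rewrite u1 ?mulr1 //.
  by rewrite mulr_gt0 // exprn_gt0.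
apply: le_trans h; rewrite ler_pM2r // ler_eXn2l //; first by have := ltn_ord k; rewrite ltnS.
lra.
Qed.

End gen2.

Section gen3.
Context d (T : measurableType d) (R : realType).

Lemma mfun_bigmax n (g : nat -> T -> R) : (forall i, (i < n)%N -> measurable_fun setT (g i)) ->
  measurable_fun setT (fun w => \big[Order.max/0]_(i < n) g i w).
Proof.
elim: n g => [|n IH] g hg.
  by under eq_fun do rewrite big_ord0; apply: measurable_cst.
under eq_fun do rewrite big_ord_recl /=.
apply: measurable_maxr; first exact: hg.
by apply: (IH (fun i => g i.+1)) => i hi; apply: hg.
Qed.

Lemma mfun_bigmin n (g : nat -> T -> R) : (forall i, (i < n)%N -> measurable_fun setT (g i)) ->
  measurable_fun setT (fun w => \big[Order.min/1]_(i < n) g i w).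
Proof.
elim: n g => [|n IH] g hg.
  by under eq_fun do rewrite big_ord0; apply: measurable_cst.
under eq_fun do rewrite big_ord_recl /=.
apply: measurable_minr; first exact: hg.
by apply: (IH (fun i => g i.+1)) => i hi; apply: hg.
Qed.
End gen3.
Section core.
Context d (T : measurableType d) (R : realType) (P : probability T R).
Local Notation E := (EE P).
Variables (F : nat -> set (set T)) (m : nat) (X : nat -> T -> R).
Hypotheses (sF : forall i, sigma_algebra setT (F i))
  (subF : forall i, F i `<=` measurable) (monoF : forall i, F i `<=` F i.+1).
Hypothesis m0 : (0 < m)%N.
Hypothesis adapt : forall i, (i < m)%N -> Fmeas (F i) (X i).
Hypothesis X01 : forall i w, (i < m)%N -> 0 <= X i w <= 1.
Hypothesis mE : forall i j h, (i <= j)%N -> (j < m)%N -> is01 h -> Fmeas (F i) h ->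
  E (fun w => X j w * h w) = E (fun w => X i w * h w).

Lemma F_mono i j : (i <= j)%N -> F i `<=` F j.
Proof.
move=> /subnK <-; elim: (j - i)%N => [|k IH] //.
by rewrite addSn => A /IH /monoF.
Qed.

Lemma adapt' i j : (i <= j)%N -> (i < m)%N -> Fmeas (F j) (X i).
Proof. by move=> ij im; apply: Fmeas_mono (sF i) (F_mono ij) (adapt im). Qed.

Lemma bX i : (i < m)%N -> bnd (X i).
Proof.
move=> im; split; first by apply: (Fmeas_T (G := F i)); [exact: sF | exact: subF | exact: adapt].
exists 1 => w; have /andP[h0 h1] := X01 w im; by rewrite ger0_norm.
Qed.

Definition ss (lam : R) i w : R := (nat_of_bool (lam <= X i w - X 0%N w))%:R.
Definition hh lam i w := ss lam i w * \prod_(j < i) (1 - ss lam j w).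
Definition UU lam w := 1 - \prod_(j < m) (1 - ss lam j w).

Lemma tele (a : nat -> R) n :
  \sum_(i < n) a i * \prod_(j < i) (1 - a j) = 1 - \prod_(j < n) (1 - a j).
Proof.
elim: n => [|n IH]; first by rewrite !big_ord0 subrr.
rewrite big_ord_recr /= IH [in RHS]big_ord_recr /=; ring.
Qed.

Lemma Fs lam i j : (j <= i)%N -> (j < m)%N -> Fmeas (F i) (ss lam j).
Proof.
move=> ji jm; rewrite /Fmeas /ss; apply: (@mfun_ge _ (g_sigma_algebraType (F i)) R (fun w => X j w - X 0%N w)); apply: measurable_funB.
  exact: adapt'.
exact: adapt' (leq0n _) m0.
Qed.

Lemma Fh lam i : (i < m)%N -> Fmeas (F i) (hh lam i).
Proof.
move=> im; rewrite /Fmeas /hh; apply: measurable_funM; first exact: Fs.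
apply: (@mfun_prod _ (g_sigma_algebraType (F i)) R i (fun j w => 1 - ss lam j w)) => j ji.
apply: measurable_funB; first exact: measurable_cst.
by apply: Fs; [apply: ltnW | apply: ltn_trans im].
Qed.

Lemma is01_ss lam j : is01 (ss lam j).
Proof. exact: is01_ge. Qed.

Lemma is01_hh lam i : is01 (hh lam i).
Proof.
apply: is01_M; first exact: is01_ss.
by apply: (@is01_prod _ _ _ (fun j w => 1 - ss lam j w)) => j; apply: is01_C; apply: is01_ss.
Qed.

Lemma is01_UU lam : is01 (UU lam).
Proof. by apply: is01_C; apply: (@is01_prod _ _ _ (fun j w => 1 - ss lam j w)) => j; apply: is01_C; apply: is01_ss. Qed.

Lemma bh lam i : (i < m)%N -> bnd (hh lam i).
Proof.
move=> im; split; first by apply: (Fmeas_T (G := F i)); [exact: sF | exact: subF | exact: Fh].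
by exists 1 => w; apply: is01_bnd; apply: is01_hh.
Qed.

Lemma UUE lam w : UU lam w = \sum_(i < m) hh lam i w.
Proof. by rewrite /UU /hh -(tele (fun j => ss lam j w)). Qed.

Lemma bU lam : bnd (UU lam).
Proof.
split; last by exists 1 => w; apply: is01_bnd; apply: is01_UU.
have -> : UU lam = (fun w => \sum_(i < m) hh lam i w) by apply/funext => w; apply: UUE.
by case: (@bnd_sum _ _ _ m (hh lam)) => // i im; apply: bh.
Qed.

Definition DD w := X m.-1 w - X 0%N w.

Lemma bD : bnd DD.
Proof. by apply: bndB; apply: bX; rewrite // prednK. Qed.

Lemma maximal lam : lam * E (UU lam) <= E (fun w => DD w * UU lam w).
Proof.
rewrite /EE; under eq_Rintegral do rewrite UUE.
under [X in _ <= X]eq_Rintegral do rewrite UUE mulr_sumr.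
rewrite -!/(EE _ _).
rewrite (@Esum _ _ _ P m (hh lam)); last by move=> i im; apply: bh.
rewrite (@Esum _ _ _ P m (fun i w => DD w * hh lam i w)); last by move=> i im; apply: bndM; [apply: bD|apply: bh].
rewrite mulr_sumr; apply: ler_sum => i _.
have im : (i < m)%N := ltn_ord i.
have mm : (m.-1 < m)%N by rewrite prednK.
have bi := bh lam im.
rewrite /DD.
have -> : E (fun w => (X m.-1 w - X 0%N w) * hh lam i w) =
   E (fun w => X m.-1 w * hh lam i w - X 0%N w * hh lam i w).
  by congr EE; apply/funext => w; rewrite mulrBl.
rewrite EB; [|by apply: bndM; [apply: bX|] | by apply: bndM; [apply: bX|]].
rewrite (mE (i := i)) //; last by apply: Fh.
  2: by rewrite -ltnS prednK.
  2: exact: is01_hh.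
rewrite -EB; [|by apply: bndM; [apply: bX|] | by apply: bndM; [apply: bX|]].
rewrite -EZ //; apply: leE.
- by apply: bndM => //; apply: bnd_cst.
- by apply: bndB; apply: bndM => //; apply: bX.
move=> w; rewrite -mulrBl.
have p0 : 0 <= \prod_(j < i) (1 - ss lam j w).
  by case: (@is01_prod _ _ i (fun j w => 1 - ss lam j w) (fun j => is01_C (is01_ss lam j)) w) => /= ->.
rewrite /hh; move: p0; rewrite /ss.
case h: (lam <= X i w - X 0%N w) => /= p0; last by rewrite !mul0r !mulr0.
by rewrite !mul1r; apply: ler_wpM2r.
Qed.

Definition vv w := \big[Order.max/0]_(i < m) X i w - X 0%N w.

Lemma vv01 w : 0 <= vv w <= 1.
Proof.
have /andP[a0 a1] := X01 w m0.
apply/andP; split.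
  rewrite subr_ge0; exact: (le_bigmax 0 (fun i : 'I_m => X i w) (Ordinal m0)).
rewrite lerBlDr; apply: (le_trans (y := 1)); last by rewrite lerDl.
by apply: bigmax_le => // i _; have /andP[] := X01 w (ltn_ord i).
Qed.

Lemma U1 lam w : 0 < lam -> lam <= vv w -> UU lam w = 1.
Proof.
move=> l0 h.
have /andP[a0 a1] := X01 w m0.
have [i hi] : exists i : 'I_m, lam + X 0%N w <= X i w.
  apply: exists_bigmax; first by lra.
  by rewrite -lerBrDr.
rewrite /UU (bigD1 i) //= /ss.
have -> : (lam <= X i w - X 0%N w) = true by rewrite lerBrDr.
by rewrite subrr mul0r subr0.
Qed.

Lemma bvv : bnd vv.
Proof.
split; last by exists 1 => w; have /andP[a b] := vv01 w; rewrite ger0_norm.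
apply: measurable_funB; last by case: (bX m0).
by apply: mfun_bigmax => i im; case: (bX im).
Qed.

Lemma vbound l0 K : 0 < l0 -> 1 < 2 ^+ K * l0 ->
  E vv <= l0 + \sum_(k < K) (2 ^+ k * l0) * E (UU (2 ^+ k * l0)).
Proof.
move=> l00 hK.
have bs : forall k, (k < K)%N -> bnd (fun w => (2 ^+ k * l0) * UU (2 ^+ k * l0) w).
  by move=> k _; apply: bndM; [apply: bnd_cst | apply: bU].
apply: le_trans (@leE _ _ _ P vv (fun w => l0 + \sum_(k < K) (2 ^+ k * l0) * UU (2 ^+ k * l0) w) _ _ _) _.
- exact: bvv.
- by apply: bndD; [apply: bnd_cst | apply: (bnd_sum (f := fun k w => (2 ^+ k * l0) * UU (2 ^+ k * l0) w))].
- move=> w; apply: (dyadic (u := fun l => UU l w)) => //.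
  + by have /andP[_ h] := vv01 w; apply: le_lt_trans hK.
  + by move=> l; case: (is01_UU l w) => ->.
  + by move=> l lp hl; apply: U1.
rewrite ED; [|exact: bnd_cst|exact: (bnd_sum (f := fun k w => (2 ^+ k * l0) * UU (2 ^+ k * l0) w))].
rewrite Ecst (@Esum _ _ _ P K (fun k w => (2 ^+ k * l0) * UU (2 ^+ k * l0) w)) //.
by apply: lerD => //; apply: ler_sum => k _; rewrite EZ //; apply: bU.
Qed.

Lemma boundA l0 K : 0 < l0 -> 1 < 2 ^+ K * l0 ->
  E vv <= l0 + K%:R * E (fun w => Order.max (DD w) 0).
Proof.
move=> l00 hK; apply: le_trans (vbound l00 hK) _; apply: lerD => //.
have bDp : bnd (fun w => Order.max (DD w) 0).
  case: bD => mD [M hM]; split; first by apply: measurable_maxr => //; apply: measurable_cst.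
  exists M => w; case: (leP (DD w) 0) => _; last exact: hM.
  by rewrite normr0; apply: le_trans (hM w).
have hk : forall k : 'I_K, (2 ^+ k * l0) * E (UU (2 ^+ k * l0)) <= E (fun w => Order.max (DD w) 0).
  move=> k; apply: le_trans (maximal _) _; apply: leE.
  - by apply: bndM; [apply: bD | apply: bU].
  - exact: bDp.
  move=> w; case: (is01_UU (2 ^+ k * l0) w) => ->; first by rewrite mulr0 le_max lexx orbT.
  by rewrite mulr1 le_max lexx.
apply: le_trans (ler_sum _ (fun k _ => hk k)) _.
by rewrite sumr_const card_ord mulr_natl.
Qed.

Lemma termB c : 0 < c -> c * E (UU c) <= E (fun w => DD w ^+ 2) / c.
Proof.
move=> c0.
have bD2 : bnd (fun w => DD w ^+ 2).
  have -> : (fun w => DD w ^+ 2) = (fun w => DD w * DD w) by apply/funext => w; rewrite expr2.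
  by apply: bndM; apply: bD.
have h1 := maximal c.
have bU' := bU c.
have b1 : bnd (fun w => c^-1 * DD w ^+ 2) by apply: bndM => //; apply: bnd_cst.
have b2 : bnd (fun w => c * UU c w) by apply: bndM => //; apply: bnd_cst.
have b3 : bnd (fun w => 2^-1 * (c^-1 * DD w ^+ 2)) by apply: bndM => //; apply: bnd_cst.
have b4 : bnd (fun w => 2^-1 * (c * UU c w)) by apply: bndM => //; apply: bnd_cst.
have h2 : E (fun w => DD w * UU c w) <= 2^-1 * (c^-1 * E (fun w => DD w ^+ 2)) + 2^-1 * (c * E (UU c)).
  have eR : E (fun w => 2^-1 * (c^-1 * DD w ^+ 2) + 2^-1 * (c * UU c w)) =
     2^-1 * (c^-1 * E (fun w => DD w ^+ 2)) + 2^-1 * (c * E (UU c)).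
    rewrite ED // EZ // EZ // EZ // EZ //.
  rewrite -eR.
  apply: leE.
  - by apply: bndM; [apply: bD | apply: bU].
  - exact: bndD.
  move=> w; case: (is01_UU c w) => ->.
    rewrite mulr0 mulr0 mulr0 addr0; apply: mulr_ge0 => //; apply: mulr_ge0.
      by rewrite invr_ge0 ltW.
    exact: sqr_ge0.
  rewrite !mulr1.
  have e : (DD w - c) ^+ 2 / c = c^-1 * DD w ^+ 2 - 2 * DD w + c.
    by field; rewrite gt_eqF.
  have : 0 <= (DD w - c) ^+ 2 / c by apply: divr_ge0; [apply: sqr_ge0 | apply: ltW].
  rewrite e => h; lra.
rewrite mulrC.
lra.
Qed.

Lemma boundB l0 K : 0 < l0 -> 1 < 2 ^+ K * l0 ->
  E vv <= l0 + 2 * E (fun w => DD w ^+ 2) / l0.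
Proof.
move=> l00 hK; apply: le_trans (vbound l00 hK) _; apply: lerD => //.
set S := E (fun w => DD w ^+ 2).
have S0 : 0 <= S by apply: E_ge0 => w; apply: sqr_ge0.
apply: le_trans (ler_sum (I := 'I_K) _ (fun k _ => termB (c := 2 ^+ k * l0) _)) _.
  by move=> k; rewrite mulr_gt0 // exprn_gt0.
have -> : \sum_(k < K) S / (2 ^+ k * l0) = S / l0 * \sum_(k < K) (2 ^+ k)^-1.
  rewrite mulr_sumr; apply: eq_bigr => k _.
  have : (2 ^+ k : R) != 0 by rewrite gt_eqF // exprn_gt0.
  by move=> h; field; rewrite h gt_eqF.
have g : \sum_(k < K) (2 ^+ k : R)^-1 + 2 * (2 ^+ K)^-1 = 2 := geo2 K.
have : 0 <= 2 * (2 ^+ K : R)^-1 by rewrite mulr_ge0 // invr_ge0 exprn_ge0.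
have : 0 <= S / l0 by rewrite divr_ge0 // ltW.
set s := \sum_(k < K) _ in g *.
move=> h1 h2.
have hs : s <= 2 by lra.
have -> : 2 * S / l0 = S / l0 * 2 by ring.
exact: ler_wpM2l.
Qed.

End core.
Section coord.
Context d (T : measurableType d) (R : realType) (P : probability T R).
Local Notation E := (EE P).
Variables (F : nat -> set (set T)) (m : nat) (X : nat -> T -> R).
Hypotheses (sF : forall i, sigma_algebra setT (F i))
  (subF : forall i, F i `<=` measurable) (monoF : forall i, F i `<=` F i.+1).
Hypothesis m0 : (0 < m)%N.
Hypothesis adapt : forall i, (i < m)%N -> Fmeas (F i) (X i).
Hypothesis X01 : forall i w, (i < m)%N -> 0 <= X i w <= 1.
Hypothesis mart : forall i, (i.+1 < m)%N -> forall A, F i A ->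
  \int[P]_(w in A) X i.+1 w = \int[P]_(w in A) X i w.

Lemma F_mono' i j : (i <= j)%N -> F i `<=` F j.
Proof.
move=> /subnK <-; elim: (j - i)%N => [|k IH] //.
by rewrite addSn => A /IH /monoF.
Qed.

Lemma mEX i j h : (i <= j)%N -> (j < m)%N -> is01 h -> Fmeas (F i) h ->
  E (fun w => X j w * h w) = E (fun w => X i w * h w).
Proof.
move=> ij jm h01 hF.
set A := h @^-1` [set 1].
have FA : F i A by apply: FmeasP => //; apply: measurable_set1.
have eA : forall k, E (fun w => X k w * h w) = \int[P]_(w in A) X k w.
  move=> k; rewrite Rintegral_mkcond /EE; apply: eq_Rintegral => w _.
  rewrite patchE; case: (h01 w) => e.
    have nA : w \notin A.
      apply/negP => /set_mem; rewrite /A /preimage /= e => /eqP.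
      by rewrite eq_sym oner_eq0.
    by rewrite (negbTE nA) e mulr0.
  have iA : w \in A by apply: mem_set; rewrite /A /preimage /= e.
  by rewrite iA e mulr1.
rewrite !eA; move: jm; rewrite -(subnK ij); elim: (j - i)%N => [//|k IH] km.
rewrite addSn mart //; last by apply: (F_mono' (leq_addl k i)).
by apply: IH; apply: ltn_trans km.
Qed.

Definition rng w := \big[Order.max/0]_(i < m) X i w - \big[Order.min/1]_(i < m) X i w.
Definition Dc w := X m.-1 w - X 0%N w.

Let Y i w := 1 - X i w.

Let adaptY i : (i < m)%N -> Fmeas (F i) (Y i).
Proof. by move=> im; rewrite /Fmeas /Y; apply: measurable_funB; [apply: measurable_cst | exact: adapt]. Qed.

Let Y01 i w : (i < m)%N -> 0 <= Y i w <= 1.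
Proof. by move=> im; have /andP[a b] := X01 w im; rewrite /Y; apply/andP; split; lra. Qed.

Let bXi i : (i < m)%N -> bnd (X i).
Proof. by move=> im; exact: (bX sF subF adapt X01 im). Qed.

Let mEY i j h : (i <= j)%N -> (j < m)%N -> is01 h -> Fmeas (F i) h ->
  E (fun w => Y j w * h w) = E (fun w => Y i w * h w).
Proof.
move=> ij jm h01 hF.
have bh : bnd h.
  split; first by apply: (Fmeas_T (G := F i)).
  by exists 1 => w; apply: is01_bnd.
have im : (i < m)%N by apply: leq_ltn_trans jm.
have eY k : (k < m)%N -> E (fun w => Y k w * h w) = E h - E (fun w => X k w * h w).
  move=> km; rewrite -EB //; last by apply: bndM => //; apply: bXi.
  by congr EE; apply/funext => w; rewrite /Y mulrBl mul1r.
by rewrite eY // eY // (mEX ij jm h01 hF).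
Qed.

Lemma rngE w : rng w = vv m X w + vv m Y w.
Proof.
rewrite /rng /vv /Y (bigmax1B m (fun i => X i w)); ring.
Qed.

Lemma DcY w : DD m Y w = - Dc w.
Proof. rewrite /DD /Dc /Y; ring. Qed.

Lemma bDc : bnd Dc.
Proof. by apply: bndB; apply: bXi; rewrite // prednK. Qed.

Lemma coordA l0 K : 0 < l0 -> 1 < 2 ^+ K * l0 ->
  E rng <= 2 * l0 + K%:R * E (fun w => `|Dc w|).
Proof.
move=> l00 hK.
have bvX : bnd (vv m X) := bvv sF subF m0 adapt X01.
have bvY : bnd (vv m Y) := bvv sF subF m0 adaptY Y01.
have -> : E rng = E (vv m X) + E (vv m Y).
  by rewrite -ED //; congr EE; apply/funext => w; rewrite rngE.
have hX := boundA sF subF monoF m0 adapt X01 mEX l00 hK.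
have hY := boundA sF subF monoF m0 adaptY Y01 mEY l00 hK.
have bm1 : bnd (fun w => Order.max (Dc w) 0).
  case: bDc => mD [M hM]; split; first by apply: measurable_maxr => //; apply: measurable_cst.
  exists M => w; case: (leP (Dc w) 0) => _; last exact: hM.
  by rewrite normr0; apply: le_trans (hM w).
have bm2 : bnd (fun w => Order.max (- Dc w) 0).
  case: bDc => mD [M hM]; split.
    by apply: measurable_maxr; [apply: measurable_funN | apply: measurable_cst].
  exists M => w; case: (leP (- Dc w) 0) => _; last by rewrite normrN.
  by rewrite normr0; apply: le_trans (hM w).
have eA : E (fun w => `|Dc w|) = E (fun w => Order.max (Dc w) 0) + E (fun w => Order.max (- Dc w) 0).
  rewrite -ED //; congr EE; apply/funext => w.
  case: (leP (Dc w) 0) => h.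
    by rewrite ler0_norm // max_l ?oppr_ge0 // add0r.
  by rewrite gtr0_norm // max_r ?addr0 // oppr_le0 ltW.
have eY : (fun w => Order.max (DD m Y w) 0) = (fun w => Order.max (- Dc w) 0).
  by apply/funext => w; rewrite DcY.
rewrite eY in hY; rewrite eA.
have eX : (fun w => Order.max (DD m X w) 0) = (fun w => Order.max (Dc w) 0) by [].
rewrite eX in hX.
lra.
Qed.

Lemma coordB l0 K : 0 < l0 -> 1 < 2 ^+ K * l0 ->
  E rng <= 2 * l0 + 4 * E (fun w => Dc w ^+ 2) / l0.
Proof.
move=> l00 hK.
have bvX : bnd (vv m X) := bvv sF subF m0 adapt X01.
have bvY : bnd (vv m Y) := bvv sF subF m0 adaptY Y01.
have -> : E rng = E (vv m X) + E (vv m Y).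
  by rewrite -ED //; congr EE; apply/funext => w; rewrite rngE.
have hX := boundB sF subF monoF m0 adapt X01 mEX l00 hK.
have hY := boundB sF subF monoF m0 adaptY Y01 mEY l00 hK.
have eY : (fun w => DD m Y w ^+ 2) = (fun w => Dc w ^+ 2).
  by apply/funext => w; rewrite DcY sqrrN.
rewrite eY in hY.
have eX : (fun w => DD m X w ^+ 2) = (fun w => Dc w ^+ 2) by [].
rewrite eX in hX.
set S := E (fun w => Dc w ^+ 2) in hX hY *.
lra.
Qed.

End coord.
Theorem lemma2p11 :
  exists C : RR, 0 < C /\
  forall (d : measure_display) (T : measurableType d) (P : probability T RR)
    (m q : nat) (mu : nat -> T -> 'I_q -> RR) (F : nat -> set (set T)),
    (0 < m)%N -> (0 < q)%N ->
    (forall i w, (i < m)%N -> in_simplex (mu i w)) ->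
    filtration F ->
    (forall x : 'I_q, martingale P F m (fun i w => mu i w x)) ->
    forall n : nat, (2 <= n * q)%N ->
      \sum_(x < q) Expect P (fun w =>
          \big[Order.max/0]_(i < m) mu i w x - \big[Order.min/1]_(i < m) mu i w x)
      <= Order.min
           (C * ln ((n * q)%:R) * Expect P (fun w => TV (mu 0%N w) (mu m.-1 w)) + n%:R^-1)
           (C * Num.sqrt (q%:R) *
              Num.sqrt (Expect P (fun w => \sum_(x < q) (mu m.-1 w x - mu 0%N w x) ^+ 2))).
Proof.
have L2 : 0 < ln (2 : RR) by apply: ln_gt0; lra.
have C6 : 0 <= 6 / ln (2 : RR) by apply: divr_ge0; [lra | apply: ltW].
exists (6 + 6 / ln (2 : RR)); split; first by lra.
move=> d T P m q mu F hm hq hsimp [sF [subF monoF]] hmart n hnq.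
set C := 6 + 6 / ln (2 : RR).
have hyp : forall x : 'I_q, (forall i, (i < m)%N -> Fmeas (F i) (fun w => mu i w x)) /\
    (forall i w, (i < m)%N -> 0 <= mu i w x <= 1).
  move=> x; split.
    by move=> i im; apply: FmeasI; exact: ((hmart x).1 i im).1.
  move=> i w im; have [h0 h1] := hsimp i w im; apply/andP; split => //.
  rewrite -h1 (bigD1 x) //= lerDl; apply: sumr_ge0 => y _; exact: h0.
have hA : forall (x : 'I_q) l0 K, 0 < l0 -> 1 < 2 ^+ K * l0 ->
   Expect P (fun w => \big[Order.max/0]_(i < m) mu i w x - \big[Order.min/1]_(i < m) mu i w x)
   <= 2 * l0 + K%:R * Expect P (fun w => `|mu m.-1 w x - mu 0%N w x|).
  move=> x l0 K l00 hK; have [ad x01] := hyp x.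
  exact: (coordA (X := fun i w => mu i w x) sF subF monoF hm ad x01 (hmart x).2 l00 hK).
have hB : forall (x : 'I_q) l0 K, 0 < l0 -> 1 < 2 ^+ K * l0 ->
   Expect P (fun w => \big[Order.max/0]_(i < m) mu i w x - \big[Order.min/1]_(i < m) mu i w x)
   <= 2 * l0 + 4 * Expect P (fun w => (mu m.-1 w x - mu 0%N w x) ^+ 2) / l0.
  move=> x l0 K l00 hK; have [ad x01] := hyp x.
  exact: (coordB (X := fun i w => mu i w x) sF subF monoF hm ad x01 (hmart x).2 l00 hK).
have bDx : forall x : 'I_q, bnd (fun w => mu m.-1 w x - mu 0%N w x).
  move=> x; have [ad x01] := hyp x.
  apply: bndB.
    by apply: (bX (X := fun i w => mu i w x) sF subF ad x01); rewrite prednK.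
  exact: (bX (X := fun i w => mu i w x) sF subF ad x01 hm).
set L := \sum_(x < q) _.
rewrite le_min; apply/andP; split.
-
  have hN : (2 <= n * q)%N := hnq.
  move: hnq; set N := (n * q)%N => hnq.
  have N0 : (0 < N)%N by apply: leq_trans hnq.
  have n0 : (0 < n)%N by move: N0; rewrite /N muln_gt0 => /andP[].
  set t := trunc_log 2 N.
  have t0 : (0 < t)%N by rewrite /t trunc_log_gt0.
  have tle : (2 ^ t <= N)%N by apply: trunc_logP.
  have tlt : (N < 2 ^ t.+1)%N by apply: trunc_log_ltn.
  set l0 : RR := (2 * N%:R)^-1.
  have NR : (0 : RR) < N%:R by rewrite ltr0n.
  have l00 : 0 < l0 by rewrite invr_gt0 mulr_gt0.
  have hK : 1 < 2 ^+ t.+2 * l0.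
    have h : (2 * N < 2 ^ t.+2)%N by rewrite expnS ltn_pmul2l.
    have h' : ((2 * N)%:R < (2 ^ t.+2)%:R :> RR) by rewrite ltr_nat.
    rewrite natrM natrX in h'.
    by rewrite /l0 ltr_pdivlMr ?mulr_gt0 // mul1r.
  apply: le_trans (ler_sum (I := 'I_q) _ (fun x _ => hA x l0 t.+2 l00 hK)) _.
  rewrite big_split /= sumr_const card_ord -mulr_sumr.
  have bTV : bnd (fun w => TV (mu 0%N w) (mu m.-1 w)).
    apply: bndM; first exact: bnd_cst.
    apply: (@bnd_sumO _ _ _ q (fun x w => `|mu 0%N w x - mu m.-1 w x|)) => x.
    have := bnd_norm (bDx x).
    by congr bnd; apply/funext => w; rewrite distrC.
  have eS : \sum_(x < q) Expect P (fun w => `|mu m.-1 w x - mu 0%N w x|) =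
      2 * Expect P (fun w => TV (mu 0%N w) (mu m.-1 w)).
    rewrite -(EZ P 2 bTV).
    rewrite -(@EsumO _ _ _ P q (fun x w => `|mu m.-1 w x - mu 0%N w x|)); last first.
      by move=> x; apply: bnd_norm.
    congr EE; apply/funext => w; rewrite /TV mulrA divff ?mul1r //.
    by apply: eq_bigr => x _; rewrite distrC.
  rewrite eS.
  set ET := Expect P _.
  have ET0 : 0 <= ET by apply: E_ge0 => w; rewrite /TV mulr_ge0 // sumr_ge0.
  have eq1 : (2 * l0) *+ q = n%:R^-1.
    rewrite -mulr_natr /l0 /N natrM; field.
    by rewrite !pnatr_eq0 -!lt0n n0 hq.
  rewrite eq1.
  have lnN : t%:R * ln (2 : RR) <= ln (N%:R : RR).
    rewrite mulr_natl -lnXn //.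
    rewrite ler_ln ?posrE ?exprn_gt0 //.
    by rewrite -natrX ler_nat.
  have lnN0 : 0 <= ln (N%:R : RR) by apply: ln_ge0; rewrite ler1n.
  have tR : (1 : RR) <= t%:R by rewrite ler1n.
  have key : 2 * (t.+2)%:R <= C * ln (N%:R : RR).
    have h1 : 6 / ln (2 : RR) * (t%:R * ln 2) = 6 * t%:R.
      by field; rewrite gt_eqF.
    have h2 : 6 / ln (2 : RR) * (t%:R * ln 2) <= 6 / ln (2 : RR) * ln (N%:R).
      exact: ler_wpM2l.
    rewrite h1 in h2; rewrite /C mulrDl -[t.+2]addn2 natrD.
    nra.
  have key2 : 0 <= (C * ln (N%:R : RR) - 2 * (t.+2)%:R) * ET.
    by apply: mulr_ge0 => //; rewrite subr_ge0.
  nra.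
-
  set Q := Expect P _.
  have bD2 : forall x : 'I_q, bnd (fun w => (mu m.-1 w x - mu 0%N w x) ^+ 2).
    move=> x; have -> : (fun w => (mu m.-1 w x - mu 0%N w x) ^+ 2) =
       (fun w => (mu m.-1 w x - mu 0%N w x) * (mu m.-1 w x - mu 0%N w x)).
      by apply/funext => w; rewrite expr2.
    by apply: bndM; apply: bDx.
  have Q0 : 0 <= Q by apply: E_ge0 => w; apply: sumr_ge0 => x _; apply: sqr_ge0.
  have qR : (0 : RR) < q%:R by rewrite ltr0n.
  have hL : forall lam : RR, 0 < lam -> L <= 2 * q%:R * lam + 4 * Q / lam.
    move=> lam lam0.
    set K := Num.Def.archi_bound lam^-1.
    have hK : 1 < 2 ^+ K * lam.
      have := @upper_nthrootP _ lam^-1 K (leqnn _).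
      by rewrite -ltr_pdivrMr // div1r.
    apply: le_trans (ler_sum (I := 'I_q) _ (fun x _ => hB x lam K lam0 hK)) _.
    rewrite big_split /= sumr_const card_ord.
    have -> : \sum_(x < q) 4 * Expect P (fun w => (mu m.-1 w x - mu 0%N w x) ^+ 2) / lam =
        4 * (\sum_(x < q) Expect P (fun w => (mu m.-1 w x - mu 0%N w x) ^+ 2)) / lam.
      by rewrite mulr_sumr mulr_suml.
    rewrite -(@EsumO _ _ _ P q (fun x w => (mu m.-1 w x - mu 0%N w x) ^+ 2)) //.
    have -> : EE P (fun w => \sum_(i < q) (mu m.-1 w i - mu 0%N w i) ^+ 2) = Q by [].
    have -> : 2 * lam *+ q = 2 * q%:R * lam by rewrite -mulr_natr; ring.
    by [].
  have sq0 : 0 <= Num.sqrt (q%:R : RR) by apply: sqrtr_ge0.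
  have sQ0 : 0 <= Num.sqrt Q by apply: sqrtr_ge0.
  have CsQ : 0 <= C * Num.sqrt (q%:R : RR) * Num.sqrt Q.
    by apply: mulr_ge0 => //; apply: mulr_ge0 => //; rewrite /C; lra.
  case: (eqVneq Q 0) => [Qe|Qn].
    apply: le_trans CsQ.
    rewrite leNgt; apply/negP => Lp.
    have q4 : 0 < 4 * q%:R :> RR by rewrite mulr_gt0.
    have := hL (L / (4 * q%:R)) (divr_gt0 Lp q4).
    rewrite Qe mulr0 mul0r addr0.
    have -> : 2 * q%:R * (L / (4 * q%:R)) = L / 2 by field; rewrite gt_eqF.
    lra.
  have Qp : 0 < Q by rewrite lt_neqAle eq_sym Qn.
  have a0 : 0 < Num.sqrt (q%:R : RR) by rewrite sqrtr_gt0.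
  have b0 : 0 < Num.sqrt Q by rewrite sqrtr_gt0.
  have := hL (Num.sqrt Q / Num.sqrt (q%:R)) (divr_gt0 b0 a0).
  have ea : (q%:R : RR) = Num.sqrt (q%:R) ^+ 2 by rewrite sqr_sqrtr // ltW.
  have eb : Q = Num.sqrt Q ^+ 2 by rewrite sqr_sqrtr // ltW.
  set a := Num.sqrt (q%:R : RR) in ea a0 sq0 CsQ *.
  set b := Num.sqrt Q in eb b0 sQ0 CsQ *.
  have -> : 2 * q%:R * (b / a) + 4 * Q / (b / a) = 6 * (a * b).
    rewrite {1}ea {1}eb; field.
    by rewrite !gt_eqF.
  move=> h; apply: le_trans h _.
  have ab0 : 0 <= a * b by rewrite mulr_ge0 // ltW.
  rewrite -mulrA; apply: ler_wpM2r => //; rewrite /C; lra.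
Qed.
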